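(* Let $\mathbb{R}^n$ be endowed with the $\ell_1$ norm, let $A\in\mathbb{R}^{m\times n}$ have at least two different columns, and let $f:\mathbb{R}^m\to\mathbb{R}\cup\{\infty\}$ be a differentiable convex function with $\mathrm{conv}(A)\subseteq\mathrm{dom}(f)$ and $\mu^\star_{f,A}>0$. Consider any run of the Frank–Wolfe algorithm with away steps (described below), with arbitrary step sizes $\alpha_k\in[0,\alpha_{\max}]$. Then at every iteration $k$ the direction $v$ chosen satisfies \[ \langle\nabla f(u_k),v\rangle^2\ge\frac{\mu^\star_{f,A}}{2}(f(u_k)-f^\star)\qquad\text{and}\qquad\langle\nabla f(u_k),v\rangle\le f^\star-f(u_k). \]
   Context: $\Delta_{n-1}=\{x\in\mathbb{R}^n_+:\sum_ix_i=1\}$, $e_i$ standard basis vectors, $a_1,\dots,a_n$ the columns of $A$, $\mathrm{conv}(A)=\{Ax:x\in\Delta_{n-1}\}$; for $x\in\Delta_{n-1}$, $I(x)=\{i:x_i>0\}$. $f^\star=\min_{x\in\Delta_{n-1}}f(Ax)$, $Z^\star=\{z\in\Delta_{n-1}:f(Az)=f^\star\}$, and $\mu^\star_{f,A}=\inf_{x\in\Delta_{n-1}\setminus Z^\star}\frac{2(f(Ax)-f^\star)}{\mathrm{dist}(x,Z^\star)^2}$ with $\mathrm{dist}(x,Z^\star)=\min_{z\in Z^\star}\|x-z\|_1$. Algorithm (Frank–Wolfe with away steps): pick $x_0\in\Delta_{n-1}$, $u_0=Ax_0$. For $k=0,1,2,\dots$: let $j\in\operatorname{argmin}_{i=1,\dots,n}\langle\nabla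 f(u_k),a_i\rangle$ and $\ell\in\operatorname{argmax}_{i\in I(x_k)}\langle\nabla f(u_k),a_i\rangle$. If $\langle\nabla f(u_k),a_j-u_k\rangle<\langle\nabla f(u_k),u_k-a_\ell\rangle$ or $|I(x_k)|=1$ (regular step), set $v=a_j-u_k$, $w=e_j-x_k$, $\alpha_{\max}=1$; otherwise (away step) set $v=u_k-a_\ell$, $w=x_k-e_\ell$, $\alpha_{\max}=\frac{\langle e_\ell,x_k\rangle}{1-\langle e_\ell,x_k\rangle}$. Choose $\alpha_k\in[0,\alpha_{\max}]$ and set $x_{k+1}=x_k+\alpha_kw$, $u_{k+1}=u_k+\alpha_kv=Ax_{k+1}$. *)

(* Defs.v *)
From HB Require Import structures.
From mathcomp Require Import all_boot all_order all_algebra.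
From mathcomp Require Import all_classical all_reals all_analysis.

Set Implicit Arguments.
Unset Strict Implicit.
Unset Printing Implicit Defensive.

Import Order.TTheory GRing.Theory Num.Theory.
Import numFieldNormedType.Exports.
Local Open Scope classical_set_scope.
Local Open Scope ring_scope.

Definition simplex (R : realType) (n : nat) : set 'cV[R]_n :=
  [set x | (forall i, 0 <= x i 0) /\ \sum_i x i 0 = 1].

Definition supp (R : realType) (n : nat) (x : 'cV[R]_n) : {set 'I_n} :=
  [set i | 0 < x i 0].

Definition ebasis (R : realType) (n : nat) (i : 'I_n) : 'cV[R]_n :=
  \col_k (k == i)%:R.

Definition convcols (R : realType) (m n : nat) (A : 'M[R]_(m, n)) : set 'cV[R]_m :=
  [set A *m x | x in @simplex R n].

Definition dom (R : realType) (m : nat) (f : 'cV[R]_m -> \bar R) : set 'cV[R]_m :=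
  [set u | (f u < +oo)%E].

Definition no_minus_infty (R : realType) (m : nat) (f : 'cV[R]_m -> \bar R) : Prop :=
  forall u, f u != -oo%E.

Definition convex_ext (R : realType) (m : nat) (f : 'cV[R]_m -> \bar R) : Prop :=
  forall (x y : 'cV[R]_m) (t : R), 0 < t < 1 ->
    let z := t *: x + (1 - t) *: y in
    let s := 1 - t in
    (f z <= t%:E * f x + s%:E * f y)%E.

(* real-valued restriction (equal to f on dom f) *)
Definition Fr (R : realType) (m : nat) (f : 'cV[R]_m -> \bar R) : 'cV[R]_m -> R :=
  fun u => fine (f u).

Definition differentiable_ext (R : realType) (m : nat) (f : 'cV[R]_m -> \bar R) : Prop :=
  open (dom f) /\ forall u, dom f u -> differentiable (Fr f) u.

(* <grad f(u), w> = Df(u)[w] *)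
Definition gdot (R : realType) (m : nat) (f : 'cV[R]_m -> \bar R) (u w : 'cV[R]_m) : R :=
  'd (Fr f) u w.

(* f^* = min_{x in Delta} f(Ax) (the minimum is attained; we use the infimum) *)
Definition fstar (R : realType) (m n : nat) (f : 'cV[R]_m -> \bar R) (A : 'M[R]_(m, n)) : R :=
  inf [set Fr f (A *m x) | x in @simplex R n].

Definition Zstar (R : realType) (m n : nat) (f : 'cV[R]_m -> \bar R) (A : 'M[R]_(m, n))
  : set 'cV[R]_n :=
  [set z | @simplex R n z /\ Fr f (A *m z) = fstar f A].

Definition l1dist (R : realType) (n : nat) (x z : 'cV[R]_n) : R :=
  \sum_i `|x i 0 - z i 0|.

Definition distZ (R : realType) (m n : nat) (f : 'cV[R]_m -> \bar R) (A : 'M[R]_(m, n))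
  (x : 'cV[R]_n) : R :=
  inf [set l1dist x z | z in Zstar f A].

(* mu^*_{f,A}, an extended real (inf of the empty set is +oo) *)
Definition mustar (R : realType) (m n : nat) (f : 'cV[R]_m -> \bar R) (A : 'M[R]_(m, n))
  : \bar R :=
  ereal_inf [set ((2 * (Fr f (A *m x) - fstar f A)) / (distZ f A x) ^+ 2)%:E
            | x in @simplex R n `\` Zstar f A].

Definition regular_step (R : realType) (m n : nat) (f : 'cV[R]_m -> \bar R)
  (A : 'M[R]_(m, n)) (x : 'cV[R]_n) (j l : 'I_n) : bool :=
  let u := A *m x in
  (gdot f u (col j A - u) < gdot f u (u - col l A)) || (#|supp x| == 1)%N.

Definition fw_dir (R : realType) (m n : nat) (f : 'cV[R]_m -> \bar R)
  (A : 'M[R]_(m, n)) (x : 'cV[R]_n) (j l : 'I_n) : 'cV[R]_m :=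
  let u := A *m x in
  if regular_step f A x j l then col j A - u else u - col l A.

Definition FW_away_run (R : realType) (m n : nat) (f : 'cV[R]_m -> \bar R)
  (A : 'M[R]_(m, n)) (x : nat -> 'cV[R]_n) (j l : nat -> 'I_n) (alpha : nat -> R)
  : Prop :=
  @simplex R n (x 0%N) /\
  forall k : nat,
    let u := A *m x k in
    (forall i, gdot f u (col (j k) A) <= gdot f u (col i A)) /\
    (l k \in supp (x k)) /\
    (forall i, i \in supp (x k) -> gdot f u (col i A) <= gdot f u (col (l k) A)) /\
    (if regular_step f A (x k) (j k) (l k) then
       0 <= alpha k <= 1 /\
       x k.+1 = x k + alpha k *: (@ebasis R n (j k) - x k)
     else
       0 <= alpha k <= x k (l k) 0 / (1 - x k (l k) 0) /\
       x k.+1 = x k + alpha k *: (x k - @ebasis R n (l k))).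

(* Main.v *)
Require Import Defs.
From HB Require Import structures.
From mathcomp Require Import all_boot all_order all_algebra.
From mathcomp Require Import all_classical all_reals all_analysis.
From mathcomp Require Import ring lra.

Import Order.TTheory GRing.Theory Num.Theory.
Import numFieldNormedType.Exports.
Local Open Scope classical_set_scope.
Local Open Scope ring_scope.

Lemma grad_le (R : realType) m (F : 'cV[R]_m -> R) (u v : 'cV[R]_m) (C : R) :
  differentiable F u ->
  (forall t : R, 0 < t < 1 -> F (t *: v + u) - F u <= t * C) ->
  'd F u v <= C.
Proof.
move=> dF H.
have dv := @diff_derivable _ _ _ F u v dF.
rewrite -deriveE //.
set q := (fun h : R => h^-1 *: ((F \o shift u) (h *: v) - F u)).
have : q @ 0^'+ --> 'D_v F u.
  move=> P HP; have := dv P HP.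
  rewrite /= /dnbhs /at_right /within /= !nbhs_simpl /=.
  by apply: filterS => y Hy /lt0r_neq0 /Hy.
move=> /cvgr_to_le; apply.
near=> t.
have t0 : 0 < t by near: t; exact: nbhs_right_gt.
have t1 : t < 1 by near: t; exact: nbhs_right_lt.
rewrite /q /= -[_ *: _]/(t^-1 * _) ler_pdivrMl //.
by apply: H; rewrite t0 t1.
Unshelve. all: by end_near.
Qed.

Lemma sum_ebasis (R : realType) n (j : 'I_n) : \sum_i (@ebasis R n j) i 0 = 1.
Proof.
rewrite (bigD1 j) //= big1 ?addr0; first by rewrite mxE eqxx.
by move=> i /negbTE ij; rewrite mxE ij.
Qed.

Lemma mulmx_col_sum (R : realType) m n (A : 'M[R]_(m,n)) (z : 'cV[R]_n) :
  A *m z = \sum_i z i 0 *: col i A.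
Proof.
apply/matrixP => r k; rewrite !mxE summxE; apply: eq_bigr => i _.
by rewrite !mxE (ord1 k) mulrC.
Qed.

Lemma lin_Az (R : realType) m n (A : 'M[R]_(m,n)) (F : 'cV[R]_m -> R) u z :
  'd F u (A *m z) = \sum_i z i 0 * 'd F u (col i A).
Proof.
rewrite mulmx_col_sum linear_sum; apply: eq_bigr => i _; by rewrite linearZ.
Qed.

Lemma simplex_comb (R : realType) n (x z : 'cV[R]_n) t :
  simplex x -> simplex z -> 0 <= t <= 1 -> simplex (t *: z + (1 - t) *: x).
Proof.
move=> [x0 x1] [z0 z1] /andP[t0 t1]; split.
  move=> i; rewrite !mxE; have := x0 i; have := z0 i; nra.
rewrite (eq_bigr (fun i => t * z i 0 + (1 - t) * x i 0)); last by move=> i _; rewrite !mxE.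
by rewrite big_split /= -!mulr_sumr x1 z1; ring.
Qed.

Lemma fin_conv (R : realType) m n (A : 'M[R]_(m,n)) (f : 'cV[R]_m -> \bar R) y :
  no_minus_infty f -> convcols A `<=` dom f -> convcols A y -> f y = (Fr f y)%:E.
Proof.
move=> Hni Hd hy; rewrite /Fr fineK // fin_numE Hni /=.
by have := Hd _ hy; rewrite /dom /= => /lt_eqF ->.
Qed.

Lemma grad_ineq (R : realType) m n (A : 'M[R]_(m,n)) (f : 'cV[R]_m -> \bar R) x z :
  no_minus_infty f -> convex_ext f -> differentiable_ext f -> convcols A `<=` dom f ->
  simplex x -> simplex z ->
  'd (Fr f) (A *m x) (A *m z - A *m x) <= Fr f (A *m z) - Fr f (A *m x).
Proof.
move=> Hni Hc Hdf Hd sx sz.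
apply: grad_le; first by apply: Hdf.2; apply: Hd; exists x.
move=> t /andP[t0 t1].
have e : t *: (A *m z - A *m x) + A *m x = t *: (A *m z) + (1 - t) *: (A *m x).
  by apply/matrixP => i k; rewrite !mxE; ring.
have sw : simplex (t *: z + (1 - t) *: x).
  by apply: simplex_comb => //; rewrite !ltW.
have ew : t *: (A *m z) + (1 - t) *: (A *m x) = A *m (t *: z + (1 - t) *: x).
  by rewrite mulmxDr !scalemxAr.
have := Hc (A *m z) (A *m x) t; rewrite t0 t1 => /(_ erefl) /=.
rewrite ew (@fin_conv _ _ _ A f (A *m (t *: z + (1 - t) *: x))) //; last by exists (t *: z + (1 - t) *: x).
rewrite (@fin_conv _ _ _ A f (A *m z)) //; last by exists z.
rewrite (@fin_conv _ _ _ A f (A *m x)) //; last by exists x.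
rewrite -!EFinM -EFinD lee_fin e ew => h.
lra.
Qed.

Lemma key_ineq (R : realType) n (x z : 'cV[R]_n) (c : 'I_n -> R) (cl cj : R) :
  simplex x -> simplex z -> (forall i, cj <= c i) -> (forall i, 0 < x i 0 -> c i <= cl) ->
  \sum_i (x i 0 - z i 0) * c i <= (cl - cj) / 2 * l1dist x z.
Proof.
move=> [x0 x1] [z0 z1] Hj Hl.
set mid := (cl + cj) / 2.
have -> : \sum_i (x i 0 - z i 0) * c i =
   \sum_i (x i 0 - z i 0) * (c i - mid) + mid * \sum_i (x i 0 - z i 0).
  rewrite mulr_sumr -big_split /=; apply: eq_bigr => i _; ring.
rewrite sumrB x1 z1 subrr mulr0 addr0 /l1dist mulr_sumr.
apply: ler_sum => i _.
have := Hj i; have := x0 i; have := z0 i.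
case: (ltrP (z i 0) (x i 0)) => h.
  have := Hl i (le_lt_trans (z0 i) h).
  rewrite /mid; nra.
rewrite /mid; nra.
Qed.

Lemma run_simplex (R : realType) m n (A : 'M[R]_(m,n)) (f : 'cV[R]_m -> \bar R)
  x j l alpha : FW_away_run f A x j l alpha -> forall k, simplex (x k).
Proof.
move=> [Hx0 Hstep]; elim=> [//|k [IH0 IH1]].
have [_ [_ [_ Hs]]] := Hstep k.
move: Hs; case: ifP => _ [/andP[a0 a1] ->].
- split.
    move=> i; rewrite !mxE; have := IH0 i.
    case: (_ == _); rewrite ?mulr1n ?mulr0n; nra.
  rewrite (eq_bigr (fun i => x k i 0 + alpha k * ((ebasis R (j k)) i 0 - x k i 0))); last by move=> i _; rewrite !mxE.
  by rewrite big_split /= -mulr_sumr sumrB sum_ebasis IH1 subrr mulr0 addr0.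
- split.
    move=> i; rewrite !mxE; have := IH0 i.
    case: eqP => [->|_]; rewrite ?mulr1n ?mulr0n; last by nra.
    move=> h; case: (ltrP (x k (l k) 0) 1) => h1; last by nra.
    have h2 : 0 < 1 - x k (l k) 0 by rewrite subr_gt0.
    move: a1; rewrite ler_pdivlMr // => a1; nra.
  rewrite (eq_bigr (fun i => x k i 0 + alpha k * (x k i 0 - (ebasis R (l k)) i 0))); last by move=> i _; rewrite !mxE.
  by rewrite big_split /= -mulr_sumr sumrB sum_ebasis IH1 subrr mulr0 addr0.
Qed.

Theorem lemma3 (R : realType) (m n : nat) (A : 'M[R]_(m, n))
  (f : 'cV[R]_m -> \bar R)
  (Hcols : exists i j : 'I_n, col i A != col j A)
  (Hnoinf : no_minus_infty f)
  (Hconv : convex_ext f)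
  (Hdiff : differentiable_ext f)
  (Hdom : convcols A `<=` dom f)
  (Hmu : (0 < mustar f A)%E)
  (x : nat -> 'cV[R]_n) (j l : nat -> 'I_n) (alpha : nat -> R)
  (Hrun : FW_away_run f A x j l alpha) :
  forall k : nat,
    let u := A *m x k in
    let g := gdot f u (fw_dir f A (x k) (j k) (l k)) in
    (mustar f A * (2^-1 * (Fr f u - fstar f A))%:E <= (g ^+ 2)%:E)%E /\
    g <= fstar f A - Fr f u.
Proof.
move=> k u g.
have Hsimp := @run_simplex _ _ _ _ _ _ _ _ _ Hrun.
have Hs := Hsimp k.
have [_ Hstep] := Hrun.
have := Hstep k; rewrite /= => -[Hj [Hl [Hls _]]].
set c := fun i => gdot f u (col i A).
set Lu := gdot f u u.
have HLu : Lu = \sum_i x k i 0 * c i by rewrite /Lu /gdot /u lin_Az.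
have greg : gdot f u (col (j k) A - u) = c (j k) - Lu by rewrite /gdot linearB.
have gaway : gdot f u (u - col (l k) A) = Lu - c (l k) by rewrite /gdot linearB.
have Hg : g <= c (j k) - Lu /\ g <= Lu - c (l k).
  rewrite /g /fw_dir /regular_step -/u.
  case: ifP; last first.
    move=> h; have h' : ~~ (c (j k) - Lu < Lu - c (l k)).
      by apply/negP => h2; move: h; rewrite /gdot /c /Lu in greg gaway h2 *; rewrite greg gaway h2.
    rewrite gaway; split; last exact: lexx.
    by rewrite leNgt.
  rewrite greg => /orP [h|h].
    move: h; rewrite gaway => h; split; [exact: lexx | exact: ltW].
  have [i0 Hi0] := cards1P h.
  have Hz : forall i, i != l k -> x k i 0 = 0.
    move=> i il; have : i \notin supp (x k).
      by move: Hl; rewrite Hi0 !inE => /eqP <-.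
    rewrite /supp inE -leNgt => hi; apply/eqP; rewrite eq_le hi.
    exact: Hs.1.
  have Hxl : x k (l k) 0 = 1.
    rewrite -Hs.2 (bigD1 (l k)) //= big1 ?addr0 // => i /Hz.
  have HLc : Lu = c (l k).
    rewrite HLu (bigD1 (l k)) //= big1 ?addr0 ?Hxl ?mul1r // => i /Hz ->.
    by rewrite mul0r.
  rewrite HLc subrr; split; first exact: lexx.
  by rewrite subr_le0; apply: Hj.
have Hlow : forall z, simplex z -> Fr f u + (c (j k) - Lu) <= Fr f (A *m z).
  move=> z sz.
  have := @grad_ineq _ _ _ A f (x k) z Hnoinf Hconv Hdiff Hdom Hs sz.
  rewrite -/u linearB lin_Az -/(gdot f u u) -/Lu.
  have : c (j k) <= \sum_i z i 0 * c i.
    rewrite -[c (j k)]mul1r -sz.2 mulr_suml; apply: ler_sum => i _.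
    by apply: ler_wpM2l; [exact: sz.1 | exact: Hj].
  rewrite /c /gdot; lra.
have Hne : nonempty [set Fr f (A *m z) | z in @simplex R n].
  by exists (Fr f u), (x k).
have Hfs : Fr f u + (c (j k) - Lu) <= fstar f A.
  by apply: lb_le_inf => // _ [z sz <-]; exact: Hlow.
have Hfu : fstar f A <= Fr f u.
  apply: ge_inf; last by exists (x k).
  by exists (Fr f u + (c (j k) - Lu)) => _ [z sz <-]; exact: Hlow.
split; last by case: Hg => Hg1 _; lra.
set D := Fr f u - fstar f A.
have : D = 0 \/ 0 < D.
  have : 0 <= D by rewrite /D subr_ge0.
  by rewrite le_eqVlt => /orP [/eqP <-|->]; [left|right].
case=> [D0|Dpos].
  by rewrite D0 mulr0 mule0 lee_fin sqr_ge0.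
have nZ : ~ Zstar f A (x k).
  by move=> [_ e]; move: Dpos; rewrite /D /u e subrr ltxx.
set d := distZ f A (x k).
have Hmu_le : (mustar f A <= ((2 * D) / d ^+ 2)%:E)%E.
  by apply: ereal_inf_lbound; exists (x k).
have Key : forall z, Zstar f A z -> D <= (- g) * l1dist (x k) z.
  move=> z [sz ez].
  have := @grad_ineq _ _ _ A f (x k) z Hnoinf Hconv Hdiff Hdom Hs sz.
  rewrite -/u linearB lin_Az -/(gdot f u u) -/Lu ez => h1.
  have h2 : D <= \sum_i (x k i 0 - z i 0) * c i.
    under eq_bigr do rewrite mulrBl.
    rewrite sumrB -HLu; move: h1; rewrite /D /c /gdot; lra.
  have h3 := @key_ineq _ _ (x k) z c (c (l k)) (c (j k)) Hs sz Hj.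
  have h4 : (c (l k) - c (j k)) / 2 <= - g by case: Hg => ? ?; lra.
  have h5 : 0 <= l1dist (x k) z by apply: sumr_ge0 => i _.
  apply: (le_trans h2); apply: (le_trans (h3 _)).
    by move=> i hi; apply: Hls; rewrite /supp inE.
  exact: ler_wpM2r.
have [[z0 Hz0]|Zn] := pselect (exists z, Zstar f A z); last first.
  have d0 : d = 0.
    rewrite /d /distZ.
    have -> : [set l1dist (x k) z | z in Zstar f A] = set0.
      apply/seteqP; split => [y [z hz _]|y] //.
      by exfalso; apply: Zn; exists z.
    exact: inf0.
  have := lt_le_trans Hmu Hmu_le.
  by rewrite d0 lte_fin expr0n /= invr0 mulr0 ltxx.
have gpos : 0 < - g.
  have := Key z0 Hz0; have : 0 <= l1dist (x k) z0 by apply: sumr_ge0 => i _.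
  case: (ltrP 0 (- g)) => // hg h1 h2; exfalso; clear Hmu_le Hmu; nra.
have Hd : D / (- g) <= d.
  apply: lb_le_inf; first by exists (l1dist (x k) z0), z0.
  by move=> _ [z hz <-]; rewrite ler_pdivrMr // mulrC; exact: Key.
have dpos : 0 < d by apply: lt_le_trans Hd; exact: divr_gt0.
have HDd : D <= (- g) * d by move: Hd; rewrite ler_pdivrMr // mulrC.
move: (mustar f A) Hmu Hmu_le => mu.
case: mu => [r| |] Hr Hle; last by []; last by [].
rewrite -EFinM lee_fin.
rewrite lee_fin in Hle.
have h1 : r * (2^-1 * D) <= (2 * D) / d ^+ 2 * (2^-1 * D).
  by apply: ler_wpM2r => //; rewrite mulr_ge0 // ?invr_ge0 ?ltW.
apply: (le_trans h1).
have -> : 2 * D / d ^+ 2 * (2^-1 * D) = D ^+ 2 / d ^+ 2 by field; exact: lt0r_neq0.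
rewrite ler_pdivrMr ?exprn_gt0 //.
have : 0 <= D by exact: ltW.
nra.
Qed.
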